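(* Let $\mathcal L(x,E)=\partial_x+\frac{\ell}{x}+e+p(x,E)e_0$ with $p(x,E)=x^{Mh^\vee}-E$, and let $h\in\mathfrak h$ satisfy $[h,e]=e$ and $[h,e_0]=-(h^\vee-1)e_0$. Then the gauge transformed connection $q(x,E)^{\operatorname{ad}h}\mathcal L(x,E):=q(x,E)^{h}\circ\mathcal L(x,E)\circ q(x,E)^{-h}$ satisfies $$q(x,E)^{\operatorname{ad}h}\mathcal L(x,E)=\partial_x+q(x,E)\Lambda+\frac{\ell-Mh}{x}+O(x^{-1-\delta}),\qquad x\to+\infty,$$ where $\Lambda=e_0+e$.
   Context: $\mathfrak g$ is a simple complex Lie algebra of type $A$, $D$ or $E$ with Chevalley generators $\{f_i,h_i,e_i\}_{i=1}^n$, Cartan subalgebra $\mathfrak h=\bigoplus\mathbb Ch_i$, dual Coxeter number $h^\vee$, normalized invariant form $(a|b)=\kappa(a,b)/h^\vee$ ($\kappa$ the Killing form). The affine Kac–Moody algebra is $\widehat{\mathfrak g}=\mathfrak g\otimes\mathbb C[t,t^{-1}]\oplus\mathbb Cc$ with $[a\otimes f,b\otimes g]=[a,b]\otimes fg+(a|b)\operatorname{res}_{t=0}(f'g\,dt)c$ and $c$ central; $e_0=a_0\otimes t$ with $a_0$ a nonzero element of the root space $\mathfrak g_{-\theta}$, $-\theta$ the lowest root; $e=\sum_{i=1}^ne_i$. Fix $\ell\in\mathfrak h$, $M>0$, $E\in\mathbb C$. Let $s=\lfloor\frac{M+1}{h^\vee M}\rfloor$, $\delta=M(h^\vee(1+s)-1)-1>0$,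 and $q(x,E)=x^M+\sum_{j=1}^s c_j(E)x^{M(1-h^\vee j)}$, where $c_j(E)=\binom{1/h^\vee}{j}(-E)^j$, so that $p(x,E)^{1/h^\vee}=q(x,E)+O(x^{-1-\delta})$ as $x\to+\infty$ (branches real positive for large positive $x$). *)

(* Defs.v *)
From HB Require Import structures.
From mathcomp Require Import all_boot all_order all_algebra.
From mathcomp Require Import all_classical all_reals all_analysis.
From mathcomp.real_closed Require Import complex.
From Stdlib Require Import ClassicalEpsilon.

Set Implicit Arguments.
Unset Strict Implicit.
Unset Printing Implicit Defensive.

Import Order.TTheory GRing.Theory Num.Theory.
Local Open Scope ring_scope.

Inductive ade_type := TA of nat | TD of nat | TE6 | TE7 | TE8.

Definition ade_valid (t : ade_type) : bool :=
  match t with TA n => (1 <= n)%N | TD n => (4 <= n)%N | _ => true end.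

Definition ade_rank (t : ade_type) : nat :=
  match t with TA n => n | TD n => n | TE6 => 6 | TE7 => 7 | TE8 => 8 end.

Definition dual_coxeter (t : ade_type) : nat :=
  match t with
  | TA n => n.+1 | TD n => (2 * n - 2)%N | TE6 => 12 | TE7 => 18 | TE8 => 30
  end.

Definition chain_adj (i j : nat) : bool := (i.+1 == j) || (j.+1 == i).

(* adjacency of the standard Dynkin diagrams, vertices 0 .. rank-1:
   A_n : the path 0 - 1 - ... - (n-1);
   D_n : the path 0 - ... - (n-2), plus vertex n-1 joined to n-3;
   E_n : the path 0 - ... - (n-2), plus vertex n-1 joined to 2.        *)
Definition ade_adj (t : ade_type) (i j : nat) : bool :=
  match t with
  | TA _ => chain_adj i j
  | TD n => [|| (i < n.-1)%N && (j < n.-1)%N && chain_adj i j,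
                (i == n.-1) && (j == n - 3)%N | (j == n.-1) && (i == n - 3)%N]
  | TE6 | TE7 | TE8 =>
      let n := ade_rank t in
      [|| (i < n.-1)%N && (j < n.-1)%N && chain_adj i j,
          (i == n.-1) && (j == 2%N) | (j == n.-1) && (i == 2%N)]
  end.

Definition ade_cartan (t : ade_type) (i j : nat) : int :=
  if i == j then 2 else if ade_adj t i j then -1 else 0.

Notation CC R := (complex R).

(* A simple complex Lie algebra of type t with Chevalley generators    *)
(* {f_i, h_i, e_i}; the Cartan matrix is the standard one of type t up *)
(* to a relabelling sig of the nodes.                                  *)

Definition is_simple_ADE_chevalley (R : realType) (t : ade_type)
    (g : vectType (CC R)) (br : g -> g -> g)
    (sig : 'I_(ade_rank t) -> 'I_(ade_rank t))
    (eg fg hg : 'I_(ade_rank t) -> g) : Prop :=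
  let A i j := ade_cartan t (sig i) (sig j) in
  [/\ ade_valid t /\ injective sig,
      [/\ forall (a : CC R) x y z, br (a *: x + y) z = a *: br x z + br y z,
          forall (a : CC R) x y z, br z (a *: x + y) = a *: br z x + br z y,
          forall x, br x x = 0 &
          forall x y z, br x (br y z) + br y (br z x) + br z (br x y) = 0],
      (exists x y, br x y != 0) /\
      (forall I : {vspace g}, (forall x y, y \in I -> br x y \in I) ->
         I = 0%VS \/ I = fullv),
      [/\ forall i j, br (hg i) (hg j) = 0,
          forall i j, br (hg i) (eg j) = (A i j)%:~R *: eg j,
          forall i j, br (hg i) (fg j) = - ((A i j)%:~R *: fg j),
          forall i j, br (eg i) (fg j) = if i == j then hg i else 0 &
          forall i j, i != j ->
             iter `|1 - A i j|%N (br (eg i)) (eg j) = 0 /\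
             iter `|1 - A i j|%N (br (fg i)) (fg j) = 0] &
      forall U : {vspace g}, (forall i, eg i \in U /\ fg i \in U) ->
         (forall x y, x \in U -> y \in U -> br x y \in U) -> U = fullv].

Definition cartan_sub (R : realType) (t : ade_type) (g : vectType (CC R))
    (hg : 'I_(ade_rank t) -> g) : {vspace g} :=
  <<[seq hg i | i <- enum 'I_(ade_rank t)]>>%VS.

(* a0 is a nonzero element of the root space g_{-theta}, theta the highest
   root: theta = sum_i kth_i alpha_i (alpha_i(h_j) = a_{ji}) is the weight
   of maximal height among all (integral) weights of nonzero vectors.    *)
Definition is_lowest_root_vector (R : realType) (t : ade_type)
    (g : vectType (CC R)) (br : g -> g -> g)
    (sig : 'I_(ade_rank t) -> 'I_(ade_rank t))
    (hg : 'I_(ade_rank t) -> g) (a0 : g) : Prop :=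
  let A i j := ade_cartan t (sig i) (sig j) in
  a0 != 0 /\
  exists kth : 'I_(ade_rank t) -> int,
    (forall j, br (hg j) a0 = - ((\sum_i kth i * A j i)%:~R *: a0)) /\
    (forall (x : g) (k : 'I_(ade_rank t) -> int), x != 0 ->
       (forall j, br (hg j) x = (\sum_i k i * A j i)%:~R *: x) ->
       \sum_i k i <= \sum_i kth i).

Definition killing (R : realType) (g : vectType (CC R)) (br : g -> g -> g)
    (a b : g) : CC R :=
  \sum_(i < \dim (fullv : {vspace g}))
     coord (vbasis fullv) i (br a (br b (tnth (vbasis fullv) i))).

Definition nform (R : realType) (t : ade_type) (g : vectType (CC R))
    (br : g -> g -> g) (a b : g) : CC R :=
  killing br a b / (dual_coxeter t)%:R.

(* The affine algebra  g^ = g (x) C[t,t^-1] (+) C c.  An element is    *)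
(* represented by (F, z) with F : int -> g the (finitely supported)    *)
(* family of coefficients of t^k, and z the coefficient of c.          *)

Definition ghat (R : realType) (g : vectType (CC R)) : lmodType (CC R) :=
  ((int -> g) * CC R)%type.

Definition supp_bound (R : realType) (g : vectType (CC R)) (F : int -> g) : nat :=
  epsilon (inhabits 0%N) (fun N : nat => forall k : int, (N < `|k|)%N -> F k = 0).

Definition tens (R : realType) (g : vectType (CC R)) (a : g) (m : int) : ghat g :=
  (fun k : int => if k == m then a else 0, 0).

(* [a (x) f, b (x) g] = [a,b] (x) fg + (a|b) res_{t=0}(f' g dt) c, c central;
   on t^i, t^j the cocycle is i (a|b) [i + j = 0].                       *)
Definition hbr (R : realType) (t : ade_type) (g : vectType (CC R))
    (br : g -> g -> g) (X Y : ghat g) : ghat g :=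
  let N := supp_bound X.1 in
  (fun k : int => \sum_(j < (N + N).+1)
      br (X.1 (j%:Z - N%:Z)) (Y.1 (k - (j%:Z - N%:Z))),
   \sum_(j < (N + N).+1)
      (j%:Z - N%:Z)%:~R * nform t br (X.1 (j%:Z - N%:Z)) (Y.1 (- (j%:Z - N%:Z)))).

(* z^{ad X} v : write v as a finite sum of ad X-eigenvectors v_k with
   integer eigenvalues k and send it to sum z^k v_k.                    *)
Definition qad (R : realType) (t : ade_type) (g : vectType (CC R))
    (br : g -> g -> g) (X : ghat g) (z : CC R) (v : ghat g) : ghat g :=
  let s := epsilon (inhabits [::])
     (fun s : seq (int * ghat g) =>
        (forall p, List.In p s -> hbr t br X p.2 = p.1%:~R *: p.2) /\
        v = \sum_(p <- s) p.2) in
  \sum_(p <- s) (z ^ p.1) *: p.2.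

Definition dC (R : realType) (f : R -> CC R) (x : R) : CC R :=
  Complex (derive1 (fun y => complex.Re (f y)) x)
          (derive1 (fun y => complex.Im (f y)) x).

(* Gauge transformation of the connection d/dx + A(x) by q(x)^h:
   q^h o (d/dx + A) o q^{-h} = d/dx + q^{ad h} A - (q'/q) h.
   A connection d/dx + A is represented by its coefficient A. *)
Definition gauge (R : realType) (t : ade_type) (g : vectType (CC R))
    (br : g -> g -> g) (hh : ghat g) (q : R -> CC R) (A : R -> ghat g)
    : R -> ghat g :=
  fun x => qad t br hh (q x) (A x) - (dC q x / q x) *: hh.

Definition gbinom (K : fieldType) (a : K) (j : nat) : K :=
  (\prod_(i < j) (a - i%:R)) / (j`!)%:R.

Definition s_const (R : realType) (hv : nat) (M : R) : nat :=
  Num.truncn ((M + 1) / (hv%:R * M)).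

Definition delta_const (R : realType) (hv : nat) (M : R) : R :=
  M * (hv%:R * (1 + (s_const hv M)%:R) - 1) - 1.

Definition c_coef (R : realType) (hv : nat) (E : CC R) (j : nat) : CC R :=
  gbinom (hv%:R^-1) j * (- E) ^+ j.

Definition p_fun (R : realType) (hv : nat) (M : R) (E : CC R) (x : R) : CC R :=
  Complex (x `^ (M * hv%:R)) 0 - E.

Definition q_fun (R : realType) (hv : nat) (M : R) (E : CC R) (x : R) : CC R :=
  Complex (x `^ M) 0 +
  \sum_(1 <= j < (s_const hv M).+1)
     c_coef hv E j * Complex (x `^ (M * (1 - hv%:R * j%:R))) 0.

(* F(x) = O(w(x)) as x -> +oo for a g^-valued F: eventually F is a fixed
   finite linear combination of elements of g^ whose scalar coefficients
   are bounded by C w(x).                                              *)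
Definition bigO_pinfty (R : realType) (V : lmodType (CC R))
    (F : R -> V) (w : R -> R) : Prop :=
  exists (m : nat) (v : 'I_m -> V) (phi : 'I_m -> R -> CC R) (C x0 : R),
    forall x, x0 < x ->
      F x = \sum_(i < m) phi i x *: v i /\
      forall i, `|phi i x| <= Complex (C * w x) 0.

(* Main.v *)
Require Import Defs.
From HB Require Import structures.
From mathcomp Require Import all_boot all_order all_algebra.
From mathcomp Require Import all_classical all_reals all_analysis.
From mathcomp.real_closed Require Import complex.
From mathcomp Require Import ring lra zify.
From Stdlib Require Import ClassicalEpsilon.
Import Order.TTheory GRing.Theory Num.Theory.
Local Open Scope ring_scope.
Section GB.
Variable K : numFieldType.

Lemma gbinom0 (a : K) : gbinom a 0 = 1.
Proof. by rewrite /gbinom big_ord0 fact0 divr1. Qed.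

Lemma gbinomS (a : K) j : gbinom a j.+1 = gbinom a j * (a - j%:R) / j.+1%:R.
Proof.
rewrite /gbinom big_ord_recr /= factS natrM invfM; ring.
Qed.

Lemma gbinomSK (a : K) j : gbinom a j.+1 * j.+1%:R = gbinom a j * (a - j%:R).
Proof. by rewrite gbinomS -mulrA mulVf ?mulr1 // pnatr_eq0. Qed.

Lemma gbinom_nat_lt (n j : nat) : (n < j)%N -> gbinom (n%:R : K) j = 0.
Proof.
move=> lt; rewrite /gbinom (bigD1 (Ordinal lt)) //= subrr mul0r mul0r //.
Qed.

Definition Vsum (a b : K) n := \sum_(j < n.+1) gbinom a j * gbinom b (n - j).

Lemma Vsum_rec (a b : K) n : Vsum a b n.+1 * n.+1%:R = Vsum a b n * (a + b - n%:R).
Proof.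
have split_ : forall j : 'I_n.+2, (n.+1%:R : K) = j%:R + (n.+1 - j)%:R.
  by move=> j; rewrite -natrD subnKC // -ltnS.
rewrite /Vsum mulr_suml.
rewrite (eq_bigr (fun j : 'I_n.+2 => gbinom a j * gbinom b (n.+1 - j) * j%:R
   + gbinom a j * gbinom b (n.+1 - j) * (n.+1 - j)%:R)); last first.
  by move=> j _; rewrite -mulrDr -split_.
rewrite big_split /=.
rewrite [X in X + _ = _]big_ord_recl [X in _ + X = _]big_ord_recr /=.
rewrite subnn mulr0 add0r mulr0 addr0.
rewrite mulr_suml -big_split /=; apply: eq_bigr => j _.
rewrite /bump /= add1n subSS.
have -> : (n.+1 - j = (n - j).+1)%N by rewrite subSn // -ltnS.
rewrite mulrAC gbinomSK -(mulrA (gbinom a j)) gbinomSK.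
rewrite natrB; last by rewrite -ltnS.
ring.
Qed.

Lemma vandermonde (a b : K) n : Vsum a b n = gbinom (a + b) n.
Proof.
elim: n => [|n IH].
  by rewrite /Vsum big_ord1 /= !gbinom0 mulr1.
have nz : (n.+1%:R : K) != 0 by rewrite pnatr_eq0.
apply: (mulIf nz); rewrite Vsum_rec IH gbinomSK //.
Qed.

Definition Tpoly (a : K) (s : nat) : {poly K} := \poly_(j < s.+1) gbinom a j.

Lemma Tpoly_exp (a : K) s k i : (i <= s)%N ->
  (Tpoly a s ^+ k)`_i = gbinom (k%:R * a) i.
Proof.
elim: k i => [|k IH] i lei.
  rewrite expr0 coefC mul0r; case: i lei => [|i] _ /=; first by rewrite gbinom0.
  by rewrite -(mulr0n (1:K)) gbinom_nat_lt.
rewrite exprSr coefM -[k.+1]addn1 natrD mulrDl mul1r -vandermonde /Vsum.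
apply: eq_bigr => j _; rewrite IH; last by rewrite (leq_trans _ lei) // -ltnS.
by rewrite coef_poly ifT // ltnS (leq_trans _ lei) // leq_subr.
Qed.
End GB.
Section PB.
Variable K : numFieldType.

Lemma poly_low_bound (P : {poly K}) (k : nat) (u : K) :
  (forall i, (i < k)%N -> P`_i = 0) -> `|u| <= 1 ->
  `|P.[u]| <= (\sum_(i < size P) `|P`_i|) * `|u| ^+ k.
Proof.
move=> Plow u1; rewrite horner_coef mulr_suml.
apply: le_trans (ler_norm_sum _ _ _) _; apply: ler_sum => i _.
rewrite normrM normrX; case: (ltnP i k) => ik.
  by rewrite Plow // normr0 !mul0r.
by apply: ler_wpM2l => //; apply: ler_wiXn2l.
Qed.

Lemma poly_bound (P : {poly K}) (u : K) : `|u| <= 1 ->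
  `|P.[u]| <= \sum_(i < size P) `|P`_i|.
Proof.
move=> u1; rewrite -[X in _ <= X]mulr1 -(expr0 `|u|).
by apply: poly_low_bound.
Qed.

Lemma gbinom1 i : gbinom (1 : K) i = ((i == 0)%N + (i == 1)%N)%:R.
Proof.
case: i => [|[|i]]; first by rewrite gbinom0.
  by rewrite gbinomS gbinom0 subr0 mul1r divr1.
by rewrite -(mulr1n (1:K)) gbinom_nat_lt.
Qed.

Lemma Tpoly_hv_low (hv s : nat) : (0 < hv)%N -> forall i, (i < s.+1)%N ->
  (('X + 1) - @Tpoly K (hv%:R^-1) s ^+ hv)`_i = 0.
Proof.
move=> hv0 i lei; rewrite coefB Tpoly_exp // mulfV ?pnatr_eq0 -?lt0n //.
rewrite gbinom1 coefD coefX coefC natrD; apply/eqP; rewrite subr_eq0.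
by case: i {lei} => [|[|i]] /=; rewrite ?addr0 ?add0r.
Qed.
End PB.
Section Asym.
Variables (R : realType) (hv : nat) (M : R) (E : CC R).
Local Notation s := (s_const hv M).
Local Notation alpha := ((hv%:R : CC R)^-1).
Definition cq j : CC R := gbinom alpha j * (- E) ^+ j.
Definition aj (j : nat) : R := M * (1 - hv%:R * j%:R).

Lemma powE (x a : R) : 0 < x -> x `^ a = expR (a * ln x).
Proof. by move=> x0; rewrite /powR gt_eqF. Qed.

Lemma ReM (k : CC R) (r : R) : complex.Re (k * r%:C%C) = complex.Re k * r.
Proof. by case: k => a b /=; rewrite mulr0 subr0. Qed.
Lemma ImM (k : CC R) (r : R) : complex.Im (k * r%:C%C) = complex.Im k * r.
Proof. by case: k => a b /=; rewrite mulr0 add0r. Qed.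
Lemma ReD (a b : CC R) : complex.Re (a + b) = complex.Re a + complex.Re b.
Proof. by case: a; case: b. Qed.
Lemma ImD (a b : CC R) : complex.Im (a + b) = complex.Im a + complex.Im b.
Proof. by case: a; case: b. Qed.
Lemma Re_sum n (F : 'I_n -> CC R) : complex.Re (\sum_i F i) = \sum_i complex.Re (F i).
Proof. exact: (big_morph _ ReD). Qed.
Lemma Im_sum n (F : 'I_n -> CC R) : complex.Im (\sum_i F i) = \sum_i complex.Im (F i).
Proof. exact: (big_morph _ ImD). Qed.

Lemma q_sum x : q_fun hv M E x = \sum_(j < s.+1) cq j * (x `^ aj j)%:C%C.
Proof.
rewrite /q_fun big_ord_recl /= /cq gbinom0 expr0 mul1r /aj mulr0 subr0 mulr1.
rewrite big_add1 /= big_mkord mul1r; congr (_ + _).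
Qed.

Definition yv (x : R) := x `^ (- (M * hv%:R)).
Definition uv (x : R) : CC R := - E * (yv x)%:C%C.
Definition Tq := @Tpoly (CC R) alpha s.

Lemma q_poly x : 0 < x -> q_fun hv M E x = (x `^ M)%:C%C * Tq.[uv x].
Proof.
move=> x0; rewrite q_sum /Tq /Tpoly horner_poly mulr_sumr; apply: eq_bigr => j _.
rewrite /cq /uv exprMn -rmorphXn /yv !powE //.
rewrite -expRM_natr.
have -> : expR (aj j * ln x) = expR (M * ln x) * expR (- (M * hv%:R) * ln x * j%:R).
  by rewrite -expRD; congr expR; rewrite /aj; ring.
rewrite rmorphM /=; ring.
Qed.

Lemma p_poly x : 0 < x -> p_fun hv M E x = (x `^ M)%:C%C ^+ hv * (1 + uv x).
Proof.
move=> x0; rewrite /p_fun /uv /yv !powE // -rmorphXn -expRM_natr mulrDr mulr1.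
rewrite mulrCA -rmorphM /= -expRD.
have -> : M * ln x * hv%:R + - (M * hv%:R) * ln x = 0 by ring.
by rewrite expR0 mulr1 mulrAC.
Qed.

Lemma deriv_sum n (k a : 'I_n -> R) x : 0 < x ->
  derive1 (fun y => \sum_(j < n) k j * y `^ a j) x
    = \sum_(j < n) k j * (a j * x `^ (a j - 1)).
Proof.
move=> x0; rewrite derive1E; apply: derive_val.
have H : is_derive x 1 (\sum_(j < n) (fun y => k j * y `^ a j))
                      (\sum_(j < n) k j * (a j * x `^ (a j - 1))).
  apply: is_derive_sum => j.
  exact: (is_deriveZ (k j) (is_derive1_powR (a j) x0)).
by rewrite fct_sumE in H.
Qed.

Lemma cplx_eta (z : CC R) : z = Complex (complex.Re z) (complex.Im z).
Proof. by case: z. Qed.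

Lemma dCq x : 0 < x -> dC (q_fun hv M E) x =
  \sum_(j < s.+1) cq j * (aj j * x `^ (aj j - 1))%:C%C.
Proof.
move=> x0; rewrite /dC.
have -> : (fun y => complex.Re (q_fun hv M E y)) =
          (fun y => \sum_(j < s.+1) complex.Re (cq j) * y `^ aj j).
  by apply: funext => y; rewrite q_sum Re_sum; apply: eq_bigr => j _; rewrite ReM.
have -> : (fun y => complex.Im (q_fun hv M E y)) =
          (fun y => \sum_(j < s.+1) complex.Im (cq j) * y `^ aj j).
  by apply: funext => y; rewrite q_sum Im_sum; apply: eq_bigr => j _; rewrite ImM.
rewrite !deriv_sum // [RHS]cplx_eta Re_sum Im_sum.
by congr Complex; apply: eq_bigr => j _; rewrite ?ReM ?ImM.
Qed.

Definition Pm := ('X + 1) - Tq ^+ hv.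

Lemma Xc_neq0 (x : R) (x0 : 0 < x) : (x `^ M)%:C%C != 0 :> CC R.
Proof. by rewrite fmorph_eq0 gt_eqF // powR_gt0. Qed.

Lemma phi0_eq x : 0 < x -> (0 < hv)%N -> Tq.[uv x] != 0 ->
  q_fun hv M E x ^ (1 - hv%:Z) * p_fun hv M E x - q_fun hv M E x
  = (x `^ M)%:C%C * Pm.[uv x] / Tq.[uv x] ^+ hv.-1.
Proof.
move=> x0 hv0 T0; rewrite q_poly // p_poly //.
have X0 : (x `^ M)%:C%C != 0 :> CC R by apply: Xc_neq0.
set X := (x `^ M)%:C%C; set T := Tq.[uv x]; set u := uv x.
have XT0 : X * T != 0 by rewrite mulf_neq0.
rewrite expfzDr // expr1z -exprnN /Pm !hornerE -/T.
rewrite -(prednK hv0) !exprS /= exprMn; field.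
by rewrite !expf_neq0 ?T0 ?X0.
Qed.

Definition Wp : {poly CC R} := \poly_(j < s.+1) (gbinom alpha j * (M * hv%:R * j%:R)%:C%C).

Lemma powEinv (x : R) : 0 < x -> x^-1 = expR (- ln x).
Proof. by move=> x0; rewrite expRN lnK. Qed.

Lemma phi1_eq x : 0 < x -> Tq.[uv x] != 0 ->
  x^-1%:C%C * M%:C%C - dC (q_fun hv M E) x / q_fun hv M E x
  = x^-1%:C%C * Wp.[uv x] / Tq.[uv x].
Proof.
move=> x0 T0.
have X0 : (x `^ M)%:C%C != 0 :> CC R by apply: Xc_neq0.
have HQ : (x `^ M)%:C%C * Tq.[uv x] = \sum_(j < s.+1) cq j * (x `^ aj j)%:C%C.
  by rewrite -q_poly // q_sum.
have HW : (x `^ M)%:C%C * Wp.[uv x] =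
    \sum_(j < s.+1) cq j * ((M * hv%:R * j%:R) * x `^ aj j)%:C%C.
  rewrite /Wp horner_poly mulr_sumr; apply: eq_bigr => j _.
  rewrite /cq /uv exprMn -rmorphXn /yv !powE // -expRM_natr.
  have -> : expR (aj j * ln x) = expR (M * ln x) * expR (- (M * hv%:R) * ln x * j%:R).
    by rewrite -expRD; congr expR; rewrite /aj; ring.
  rewrite !rmorphM /=; ring.
have HD : dC (q_fun hv M E) x = x^-1%:C%C * (M%:C%C * ((x `^ M)%:C%C * Tq.[uv x])
     - (x `^ M)%:C%C * Wp.[uv x]).
  rewrite dCq // HQ HW mulr_sumr -sumrB mulr_sumr; apply: eq_bigr => j _.
  rewrite !powE // powEinv //.
  have -> : expR ((aj j - 1) * ln x) = expR (aj j * ln x) * expR (- ln x).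
    by rewrite -expRD; congr expR; ring.
  rewrite /aj !rmorphM !rmorphB /= !rmorphM /= !rmorph_nat !rmorph1; ring.
rewrite HD q_poly //; field.
by rewrite T0 X0 fmorph_eq0 gt_eqF.
Qed.
End Asym.
Section NR.
Variable R : realType.
Definition nr (z : CC R) : R := complex.Re `|z|.
Lemma nrE z : `|z| = (nr z)%:C%C.
Proof. by rewrite /nr normc_def. Qed.
Lemma nr_ge0 z : 0 <= nr z.
Proof. by rewrite -lecR -nrE rmorph0. Qed.
Lemma nrM a b : nr (a * b) = nr a * nr b.
Proof. by apply: complexI; rewrite rmorphM -!nrE normrM. Qed.
Lemma nrX a n : nr (a ^+ n) = nr a ^+ n.
Proof. by apply: complexI; rewrite rmorphXn -!nrE normrX. Qed.
Lemma nrV a : nr (a ^-1) = (nr a)^-1.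
Proof. by apply: complexI; rewrite fmorphV -!nrE normfV. Qed.
Lemma nrD a b : nr (a + b) <= nr a + nr b.
Proof. by rewrite -lecR rmorphD /= -!nrE ler_normD. Qed.
Lemma nrB a b : nr (a - b) <= nr a + nr b.
Proof. by rewrite -lecR rmorphD /= -!nrE ler_normB. Qed.
Lemma nr1 : nr 1 = 1.
Proof. by apply: complexI; rewrite -nrE normr1. Qed.
Lemma nr_sum n (F : 'I_n -> CC R) : (\sum_i nr (F i))%:C%C = \sum_i `|F i|.
Proof. by rewrite rmorph_sum; apply: eq_bigr => i _; rewrite nrE. Qed.
Lemma nr_pos (r : R) : 0 <= r -> nr r%:C%C = r.
Proof. by move=> r0; apply: complexI; rewrite -nrE ger0_norm // lecR. Qed.
End NR.
Lemma In_mem (T : eqType) (x : T) s : List.In x s -> x \in s.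
Proof. elim: s => //= y s IH [->|/IH]; rewrite inE ?eqxx // => ->; by rewrite orbT. Qed.

Section Eig.
Variables (K : numFieldType) (V : lmodType K) (D : V -> V).
Hypothesis HD : forall a x y, D (a *: x + y) = a *: D x + D y.

Lemma D0 : D 0 = 0.
Proof.
have H := HD 1 0 0; rewrite scaler0 addr0 scale1r in H.
by apply: (addrI (D 0)); rewrite addr0 -H.
Qed.
Lemma DD x y : D (x + y) = D x + D y.
Proof. by have := HD 1 x y; rewrite !scale1r. Qed.
Lemma DZ a x : D (a *: x) = a *: D x.
Proof. by have := HD a x 0; rewrite !addr0 D0 addr0. Qed.
Lemma DN x : D (- x) = - D x.
Proof. by rewrite -scaleN1r DZ scaleN1r. Qed.
Lemma DB x y : D (x - y) = D x - D y.
Proof. by rewrite DD DN. Qed.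
Lemma Dsum (I : Type) (r : seq I) (P : pred I) (F : I -> V) :
  D (\sum_(i <- r | P i) F i) = \sum_(i <- r | P i) D (F i).
Proof. exact: (big_morph D DD D0). Qed.

Lemma indep (L : seq int) (w : int -> V) : uniq L ->
  (forall l, l \in L -> D (w l) = l%:~R *: w l) ->
  \sum_(l <- L) w l = 0 -> forall l, l \in L -> w l = 0.
Proof.
elim: L w => [|m L IH] w //= /andP [mL uL] Hw.
rewrite big_cons => Hs.
have Hw' : forall l, l \in L -> D ((l - m)%:~R *: w l) = (l%:~R) *: ((l - m)%:~R *: w l).
  by move=> l lL; rewrite DZ Hw ?inE ?lL ?orbT // !scalerA mulrC.
have Hs' : \sum_(l <- L) (l - m)%:~R *: w l = 0.
  have := congr1 (fun v => D v - m%:~R *: v) Hs.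
  rewrite /= D0 scaler0 subr0 DD Dsum Hw ?inE ?eqxx // scalerDr.
  have -> : forall a S b : V, a + S - (a + b) = S - b.
    by move=> a S b; rewrite opprD addrA (addrC a) addrK.
  rewrite scaler_sumr -sumrB => H; apply: (etrans _ H); rewrite big_seq [RHS]big_seq; apply: eq_bigr => l lL.
  by rewrite Hw ?inE ?lL ?orbT // intrB scalerBl.
have H0 := IH _ uL Hw' Hs'.
have wL : forall l, l \in L -> w l = 0.
  move=> l lL; have := H0 l lL; move/eqP; rewrite scaler_eq0 => /orP [|/eqP //].
  by rewrite intr_eq0 subr_eq0 => /eqP ml; move: mL; rewrite -ml lL.
move=> l; rewrite inE => /orP [/eqP ->|]; last exact: wL.
move: Hs; rewrite big_seq big1 ?addr0 // => l' /wL //.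
Qed.

Lemma sum_pred1_seq (I : eqType) (L : seq I) (a : I) (F : I -> V) :
  uniq L -> a \in L -> \sum_(l <- L | l == a) F l = F a.
Proof.
move=> uL aL; rewrite big_mkcond (bigD1_seq a) //= eqxx big1 ?addr0 //.
by move=> l /negbTE ->.
Qed.

Lemma sum_partition (s : seq (int * V)) (L : seq int) (F : int * V -> V) :
  uniq L -> {subset map fst s <= L} ->
  \sum_(p <- s) F p = \sum_(l <- L) \sum_(p <- s | p.1 == l) F p.
Proof.
move=> uL sub; rewrite (exchange_big_dep predT) //=.
rewrite big_seq_cond [RHS]big_seq_cond; apply: eq_bigr => p /andP [ps _].
rewrite (eq_bigl (fun l => l == p.1)); last by move=> l; rewrite eq_sym.
by rewrite sum_pred1_seq // sub // map_f.
Qed.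

Lemma sum_ind1 (L : seq int) (a : int) (v : V) : uniq L -> a \in L ->
  \sum_(l <- L) (if l == a then v else 0) = v.
Proof. by move=> uL aL; rewrite -big_mkcond sum_pred1_seq. Qed.

Lemma decomp (s : seq (int * V)) (l0 l1 l2 : int) (v0 v1 v2 : V) (z : K) :
  (forall p, p \in s -> D p.2 = p.1%:~R *: p.2) ->
  D v0 = l0%:~R *: v0 -> D v1 = l1%:~R *: v1 -> D v2 = l2%:~R *: v2 ->
  \sum_(p <- s) p.2 = v0 + v1 + v2 ->
  \sum_(p <- s) z ^ p.1 *: p.2 = z ^ l0 *: v0 + z ^ l1 *: v1 + z ^ l2 *: v2.
Proof.
move=> Hs H0 H1 H2 Hsum.
set L := undup (map fst s ++ [:: l0; l1; l2]).
have uL : uniq L by exact: undup_uniq.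
have sub : {subset map fst s <= L} by move=> x xs; rewrite mem_undup mem_cat xs.
have iL : forall x, x \in [:: l0; l1; l2] -> x \in L.
  by move=> x xs; rewrite mem_undup mem_cat xs orbT.
have l0L : l0 \in L by apply: iL; rewrite !inE eqxx.
have l1L : l1 \in L by apply: iL; rewrite !inE eqxx orbT.
have l2L : l2 \in L by apply: iL; rewrite !inE eqxx !orbT.
pose S l := \sum_(p <- s | p.1 == l) p.2.
pose T l := (if l == l0 then v0 else 0) + (if l == l1 then v1 else 0)
            + (if l == l2 then v2 else 0).
have eigI : forall (a : int) v l, D v = a%:~R *: v ->
    D (if l == a then v else 0) = l%:~R *: (if l == a then v else 0).
  by move=> a v l Hv; case: eqP => [->|_]; rewrite ?Hv ?D0 ?scaler0.
have sumT : forall (f : int -> K),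
    \sum_(l <- L) f l *: T l = f l0 *: v0 + f l1 *: v1 + f l2 *: v2.
  move=> f; rewrite /T.
  rewrite (eq_bigr (fun l => (if l == l0 then f l0 *: v0 else 0)
      + (if l == l1 then f l1 *: v1 else 0) + (if l == l2 then f l2 *: v2 else 0))).
    by rewrite !big_split /= !sum_ind1.
  move=> l _; rewrite !scalerDr.
  by do 3! [case: eqP => [->|_]; rewrite ?scaler0].
have ST : forall l, l \in L -> S l - T l = 0.
  apply: (@indep L (fun l => S l - T l)) => //.
  - move=> l lL; rewrite DB scalerBr; congr (_ - _).
      rewrite /S Dsum scaler_sumr big_seq_cond [RHS]big_seq_cond.
      by apply: eq_bigr => p /andP [ps /eqP <-]; apply: Hs.
    by rewrite /T !DD (eigI l0) // (eigI l1) // (eigI l2) // !scalerDr.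
  - rewrite sumrB -(@sum_partition s L (fun p => p.2)) // Hsum.
    have := sumT (fun _ => 1); rewrite !scale1r => <-.
    by rewrite (eq_bigr (fun l => T l)) ?subrr // => l _; rewrite scale1r.
rewrite (@sum_partition s L (fun p => z ^ p.1 *: p.2) uL sub) -sumT.
rewrite big_seq [RHS]big_seq; apply: eq_bigr => l lL.
have := ST l lL; move/subr0_eq => <-; rewrite /S scaler_sumr.
by apply: eq_bigr => p /eqP ->.
Qed.
End Eig.
Section Lie.
Variables (R : realType) (t : ade_type) (g : vectType (CC R)) (br : g -> g -> g).
Hypothesis HL : forall (a : CC R) x y z, br (a *: x + y) z = a *: br x z + br y z.
Hypothesis HR : forall (a : CC R) x y z, br z (a *: x + y) = a *: br z x + br z y.

Lemma br0l z : br 0 z = 0.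
Proof.
have H := HL 1 0 0 z; rewrite scaler0 addr0 scale1r in H.
by apply: (addrI (br 0 z)); rewrite addr0 -H.
Qed.
Lemma br0r z : br z 0 = 0.
Proof.
have H := HR 1 0 0 z; rewrite scaler0 addr0 scale1r in H.
by apply: (addrI (br z 0)); rewrite addr0 -H.
Qed.
Lemma brDl x y z : br (x + y) z = br x z + br y z.
Proof. by have := HL 1 x y z; rewrite !scale1r. Qed.
Lemma brDr x y z : br z (x + y) = br z x + br z y.
Proof. by have := HR 1 x y z; rewrite !scale1r. Qed.
Lemma brZl a x z : br (a *: x) z = a *: br x z.
Proof. by have := HL a x 0 z; rewrite !addr0 br0l addr0. Qed.
Lemma brZr a x z : br z (a *: x) = a *: br z x.
Proof. by have := HR a x 0 z; rewrite !addr0 br0r addr0. Qed.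
Lemma br_suml (I : Type) (r : seq I) (P : pred I) (F : I -> g) z :
  br (\sum_(i <- r | P i) F i) z = \sum_(i <- r | P i) br (F i) z.
Proof. exact: (big_morph (fun x => br x z) (fun x y => brDl x y z) (br0l z)). Qed.
Lemma br_sumr (I : Type) (r : seq I) (P : pred I) (F : I -> g) z :
  br z (\sum_(i <- r | P i) F i) = \sum_(i <- r | P i) br z (F i).
Proof. exact: (big_morph (fun x => br z x) (fun x y => brDr x y z) (br0r z)). Qed.

Lemma span_comm (X : seq g) : (forall u v, u \in X -> v \in X -> br u v = 0) ->
  forall a b, a \in <<X>>%VS -> b \in <<X>>%VS -> br a b = 0.
Proof.
move=> HX a b aX bX.
rewrite (coord_span (X := in_tuple X) aX) (coord_span (X := in_tuple X) bX).
rewrite br_suml big1 // => i _; rewrite brZl br_sumr big1 ?scaler0 // => j _.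
by rewrite brZr HX ?scaler0 // mem_nth.
Qed.

Lemma hbr_hhat (h : g) (Y : ghat g) :
  hbr t br (tens h 0) Y = (fun k => br h (Y.1 k), 0).
Proof.
rewrite /hbr; set N := supp_bound _.
have ltN : (N < (N + N).+1)%N by rewrite ltnS leq_addr.
have nz : forall j : 'I_(N + N).+1, j != Ordinal ltN -> (j%:Z - N%:Z == 0) = false.
  by move=> j jN; rewrite subr_eq0 eqz_nat; apply: negbTE.
congr (_, _).
  apply: funext => k; rewrite (bigD1 (Ordinal ltN)) //= subrr eqxx subr0.
  by rewrite big1 ?addr0 // => j jN; rewrite nz // br0l.
apply: big1 => j _; case: (eqVneq j (Ordinal ltN)) => [->|jN].
  by rewrite /= subrr mul0r.
rewrite /= nz // /nform /killing big1 ?mul0r ?mulr0 // => i _.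
by rewrite br0l linear0.
Qed.
End Lie.

Arguments nr {R}.

Section Bounds.
Variables (R : realType) (hv : nat) (M : R) (E : CC R).
Hypotheses (hv0 : (0 < hv)%N) (M0 : 0 < M).
Local Notation s := (s_const hv M).
Local Notation delta := (delta_const hv M).
Local Notation T := (Tq R hv M).
Local Notation u := (uv R hv M E).

Lemma nr_poly_low (P : {poly CC R}) (k : nat) (z : CC R) :
  (forall i, (i < k)%N -> P`_i = 0) -> nr z <= 1 ->
  nr P.[z] <= (\sum_(i < size P) nr P`_i) * nr z ^+ k.
Proof.
move=> Pl z1; rewrite -lecR rmorphM rmorphXn /= nr_sum -!nrE.
by apply: poly_low_bound => //; rewrite nrE -(rmorph1 (real_complex R)) lecR.
Qed.

Definition k1 := \sum_(i < size (Pm R hv M)) nr (Pm R hv M)`_i.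
Definition k2 := \sum_(i < size (Wp R hv M)) nr (Wp R hv M)`_i.
Definition k3 := \sum_(i < size (T - 1)) nr (T - 1)`_i.
Definition eps := (2 * (k3 + 1))^-1.

Lemma k_ge0 (P : {poly CC R}) : 0 <= \sum_(i < size P) nr P`_i.
Proof. by apply: sumr_ge0 => i _; apply: nr_ge0. Qed.

Lemma eps_gt0 : 0 < eps.
Proof. by rewrite invr_gt0; have := k_ge0 (T - 1); rewrite -/k3 => ?; lra. Qed.

Lemma eps_le1 : eps <= 1.
Proof.
have := k_ge0 (T - 1); rewrite -/k3 /eps => k30.
by rewrite invf_le1 //; lra.
Qed.

Lemma k3eps : k3 * eps <= 2^-1.
Proof.
have := k_ge0 (T - 1); rewrite -/k3 /eps => k30.
rewrite ler_pdivrMr; lra.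
Qed.

Lemma T_bound x : nr (u x) <= eps -> 2^-1 <= nr T.[u x].
Proof.
move=> ue.
have H1 : nr (T.[u x] - 1) <= k3 * nr (u x).
  have -> : T.[u x] - 1 = (T - 1).[u x] by rewrite !hornerE.
  rewrite -(expr1 (nr (u x))); apply: nr_poly_low; last first.
    by apply: le_trans ue eps_le1.
  case=> // _; rewrite coefB coefC /= /Tq /Tpoly coef_poly /= gbinom0 subrr //.
have H2 : k3 * nr (u x) <= 2^-1.
  apply: le_trans k3eps; apply: ler_wpM2l => //; apply: k_ge0.
have H3 := nrB _ (T.[u x]) (T.[u x] - 1).
rewrite opprB addrC subrK nr1 in H3.
lra.
Qed.

Lemma nrN (a : CC R) : nr (- a) = nr a.
Proof. by apply: complexI; rewrite -!nrE normrN. Qed.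

Lemma yv_ge0 x : 0 <= yv R hv M x.
Proof. exact: powR_ge0. Qed.

Lemma nr_u x : nr (u x) = nr E * yv R hv M x.
Proof. by rewrite /uv nrM nrN nr_pos // yv_ge0. Qed.

Lemma delta_le : delta <= M * hv%:R.
Proof.
have hvR : (0 : R) < hv%:R by rewrite ltr0n.
have hM : 0 < hv%:R * M by rewrite mulr_gt0.
set r := (M + 1) / (hv%:R * M).
have r0 : 0 <= r by apply: divr_ge0; [have := M0; lra | exact: ltW].
have hs : (s%:R : R) <= r by rewrite /s_const truncn_le.
have hr : r * (hv%:R * M) = M + 1 by rewrite /r divfK // gt_eqF.
rewrite /delta_const.
have : (s%:R : R) * (hv%:R * M) <= r * (hv%:R * M) by apply: ler_wpM2r => //; apply: ltW.
rewrite hr => H; nra.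
Qed.

Lemma thresh : exists x0 : R, 1 <= x0 /\ forall x, x0 < x -> nr (u x) <= eps.
Proof.
have hvR : (0 : R) < hv%:R by rewrite ltr0n.
have hMv : 0 < M * hv%:R by rewrite mulr_gt0.
have nE0 := nr_ge0 _ E.
set r := eps / (nr E + 1).
have r0 : 0 < r by rewrite divr_gt0 ?eps_gt0 //; lra.
exists (expR (`|ln r| / (M * hv%:R))); split.
  by rewrite -[X in X <= _]expR0 ler_expR; apply: divr_ge0 => //; exact: ltW.
move=> x x0x.
have xpos : 0 < x by apply: lt_trans x0x; apply: expR_gt0.
have Hl : `|ln r| / (M * hv%:R) < ln x.
  by rewrite -ltr_expR lnK ?posrE.
have Hy : yv R hv M x <= r.
  have rr : expR (ln r) = r by apply/eqP; rewrite lnK_eq.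
  rewrite /yv powE //; suff : expR (- (M * hv%:R) * ln x) <= expR (ln r) by rewrite rr.
  rewrite ler_expR.
  have : `|ln r| < M * hv%:R * ln x by move: Hl; rewrite ltr_pdivrMr // mulrC.
  have := ler_norm (- ln r); rewrite normrN; lra.
rewrite nr_u.
have : nr E * yv R hv M x <= nr E * r by apply: ler_wpM2l.
have : nr E * r <= eps.
  rewrite /r mulrA ler_pdivrMr; last lra.
  have := eps_gt0; nra.
lra.
Qed.

Lemma invT_bound x : nr (u x) <= eps -> (nr T.[u x])^-1 <= 2.
Proof.
move=> ue; have hT := T_bound _ ue.
have a0 : 0 < nr T.[u x] by apply: lt_le_trans hT; rewrite invr_gt0.
rewrite -[X in _ <= X]invrK lef_pV2 ?posrE ?invr_gt0 //.
Qed.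

Lemma T_neq0 x : nr (u x) <= eps -> T.[u x] != 0.
Proof.
move=> ue; have hT := T_bound _ ue; apply/eqP => T0.
have nr0 : nr (0 : CC R) = 0 by apply: complexI; rewrite -nrE normr0.
move: hT; rewrite T0 nr0 => H.
have : (0:R) < 2^-1 by rewrite invr_gt0 ltr0n.
lra.
Qed.

Lemma Xy x k : 0 < x -> x `^ M * yv R hv M x ^+ k = x `^ (M - M * hv%:R * k%:R).
Proof.
move=> x0; rewrite /yv !powE // -expRM_natr -expRD; congr expR; ring.
Qed.

Lemma phi0_bound x : 1 <= x -> nr (u x) <= eps ->
  nr (q_fun hv M E x ^ (1 - hv%:Z) * p_fun hv M E x - q_fun hv M E x)
   <= k1 * nr E ^+ s.+1 * 2 ^+ hv.-1 * x `^ (-1 - delta).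
Proof.
move=> x1 ue.
have x0 : 0 < x by apply: lt_le_trans x1.
have T0 := T_neq0 _ ue.
have hI := invT_bound _ ue.
have a0 : 0 <= (nr T.[u x])^-1 by rewrite invr_ge0 nr_ge0.
rewrite phi0_eq // !nrM nrV nrX nr_pos ?powR_ge0 // -exprVn.
have HP : nr (Pm R hv M).[u x] <= k1 * nr (u x) ^+ s.+1.
  apply: nr_poly_low; last by apply: le_trans ue eps_le1.
  by move=> i lti; rewrite /Pm Tpoly_hv_low.
have HX : (nr T.[u x])^-1 ^+ hv.-1 <= 2 ^+ hv.-1.
  by rewrite lerXn2r // nnegrE.
apply: (@le_trans _ _ (x `^ M * (k1 * nr (u x) ^+ s.+1) * 2 ^+ hv.-1)).
  apply: ler_pM => //; first by rewrite mulr_ge0 ?powR_ge0 ?nr_ge0.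
    by rewrite exprn_ge0.
  by apply: ler_wpM2l => //; apply: powR_ge0.
rewrite nr_u exprMn.
have -> : -1 - delta = M - M * hv%:R * s.+1%:R by rewrite /delta_const -addn1 natrD; ring.
by rewrite -Xy // le_eqVlt; apply/orP; left; apply/eqP; ring.
Qed.

Lemma phi1_bound x : 1 <= x -> nr (u x) <= eps ->
  nr (x^-1%:C%C * M%:C%C - dC (q_fun hv M E) x / q_fun hv M E x)
   <= 2 * k2 * nr E * x `^ (-1 - delta).
Proof.
move=> x1 ue.
have x0 : 0 < x by apply: lt_le_trans x1.
have T0 := T_neq0 _ ue.
have hI := invT_bound _ ue.
have a0 : 0 <= (nr T.[u x])^-1 by rewrite invr_ge0 nr_ge0.
rewrite phi1_eq // !nrM nrV nr_pos; last by rewrite invr_ge0 ltW.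
have HW : nr (Wp R hv M).[u x] <= k2 * nr (u x) ^+ 1.
  apply: nr_poly_low; last by apply: le_trans ue eps_le1.
  case=> // _; rewrite /Wp coef_poly /= mulr0n mulr0.
  by rewrite (_ : (0 : R)%:C%C = 0) ?mulr0.
apply: (@le_trans _ _ (x^-1 * (k2 * nr (u x) ^+ 1) * 2)).
  apply: ler_pM => //; first by rewrite mulr_ge0 ?nr_ge0 // invr_ge0 ltW.
  by apply: ler_wpM2l => //; rewrite invr_ge0 ltW.
rewrite expr1 nr_u.
have HL : 0 <= ln x by apply: ln_ge0.
have Hd := delta_le.
have : x^-1 * yv R hv M x <= x `^ (-1 - delta).
  rewrite /yv !powE // powEinv // -expRD ler_expR; nra.
have := nr_ge0 _ E; have : 0 <= k2 by apply: k_ge0.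
move=> k20 E0 H.
have -> : x^-1 * (k2 * (nr E * yv R hv M x)) * 2 = (2 * k2 * nr E) * (x^-1 * yv R hv M x) by ring.
apply: ler_wpM2l => //; rewrite !mulr_ge0 //.
Qed.
End Bounds.



Lemma mem_In (T : eqType) (x : T) s : x \in s -> List.In x s.
Proof.
elim: s => //= y s IH; rewrite inE => /orP [/eqP ->|/IH]; [left | right] => //.
Qed.

Lemma dc_pos t : ade_valid t -> (0 < dual_coxeter t)%N.
Proof. by case: t => //= n; lia. Qed.

Lemma zmod_id (V : zmodType) (a1 a2 a3 a4 a5 a6 : V) :
  a1 + a2 + a3 - a4 - (a5 + a2 + (a1 - a6)) = (a3 - a5) + (a6 - a4).
Proof.
rewrite !opprD !opprK !addrA.
rewrite (addrAC _ (- a5) (- a2)) (addrAC _ (- a4) (- a2)) (addrAC _ a3 (- a2)) addrK.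
rewrite (addrAC _ (- a5) (- a1)) (addrAC _ (- a4) (- a1)) (addrAC _ a3 (- a1)) subrr add0r.
by rewrite (addrAC _ (- a4) (- a5)) (addrAC _ (- a4) a6).
Qed.

Theorem lemma3p1 (R : realType) (t : ade_type) (g : vectType (CC R))
    (br : g -> g -> g) (sig : 'I_(ade_rank t) -> 'I_(ade_rank t))
    (eg fg hg : 'I_(ade_rank t) -> g) (a0 : g)
    (l : g) (M : R) (E : CC R) (h : g) :
  is_simple_ADE_chevalley br sig eg fg hg ->
  is_lowest_root_vector br sig hg a0 ->
  (l \in cartan_sub hg)%VS ->
  0 < M ->
  (h \in cartan_sub hg)%VS ->
  let hv := dual_coxeter t in
  let ehat : ghat g := tens (\sum_i eg i) 0 in
  let e0hat : ghat g := tens a0 1 in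
  let hhat : ghat g := tens h 0 in
  let lhat : ghat g := tens l 0 in
  let Lambda := e0hat + ehat in
  let q := q_fun hv M E in
  let delta := delta_const hv M in
  (* coefficient of L(x,E) = d/dx + l/x + e + p(x,E) e_0 *)
  let A := fun x : R => x^-1%:C%C *: lhat + ehat + p_fun hv M E x *: e0hat in
  hbr t br hhat ehat = ehat ->
  hbr t br hhat e0hat = - ((hv%:R - 1) *: e0hat) ->
  bigO_pinfty
    (fun x : R => gauge t br hhat q A x
                  - (q x *: Lambda + x^-1%:C%C *: (lhat - M%:C%C *: hhat)))
    (fun x : R => x `^ (- 1 - delta)).
Proof.
move=> Hch Hlow lC M0 hC hv ehat e0hat hhat lhat Lambda q delta A He He0.
case: Hch => [[valid _] [HL HR _ _] _ [Hhh _ _ _ _] _].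
have hv0 : (0 < hv)%N by apply: dc_pos.
pose D := hbr t br hhat.
have HDe : forall Y, D Y = (fun k => br h (Y.1 k), 0) by move=> Y; apply: hbr_hhat.
have HD : forall a x y, D (a *: x + y) = a *: D x + D y.
  move=> a x y; rewrite !HDe; apply: injective_projections => /=.
    apply: funext => k /=.
    transitivity (a *: br h (x.1 k) + br h (y.1 k)); last by [].
    by rewrite -(@brZr R g br HR) -(@brDr R g br HR).
  by rewrite scaler0 addr0.
have comm : br h l = 0.
  apply: (@span_comm R g br HL HR _ _ _ _ hC lC).
  by move=> u v /mapP [i _ ->] /mapP [j _ ->]; apply: Hhh.
have Dl : D lhat = 0.
  rewrite HDe; apply: injective_projections => //=.
  apply: funext => k /=; case: ifP => _; [exact: comm | exact: (@br0r R g br HR)].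
have Hqad : forall (z c0 c2 : CC R),
    qad t br hhat z (c0 *: lhat + ehat + c2 *: e0hat)
    = c0 *: lhat + z *: ehat + z ^ (1 - hv%:Z) *: (c2 *: e0hat).
  move=> z c0 c2.
  have H0 : D (c0 *: lhat) = (0:int)%:~R *: (c0 *: lhat).
    by rewrite (@DZ _ _ D HD) Dl scaler0 mulr0z scale0r.
  have H1 : D ehat = (1:int)%:~R *: ehat by rewrite mulr1z scale1r.
  have H2 : D (c2 *: e0hat) = (1 - hv%:Z)%:~R *: (c2 *: e0hat).
    rewrite (@DZ _ _ D HD) /D He0 intrB mulr1z scalerN !scalerA -scaleNr -pmulrn.
    by congr (_ *: _); ring.
  rewrite /qad.
  set P := (fun s : seq (int * ghat g) => _).
  have ex : exists s, P s.
    exists [:: (0%:Z, c0 *: lhat); (1%:Z, ehat); (1 - hv%:Z, c2 *: e0hat)]; split.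
      by move=> p /= [<-|[<-|[<-|[]]]].
    by rewrite !big_cons big_nil addr0 !addrA.
  have [Hin Hsum] := epsilon_spec (inhabits [::]) P ex.
  rewrite (@decomp _ _ D HD _ 0 1 (1 - hv%:Z) _ _ _ z _ H0 H1 H2 (esym Hsum)).
    by rewrite expr0z expr1z scale1r.
  by move=> p /mem_In; apply: Hin.
have [x0 [x01 Hx0]] := thresh R hv M E hv0 M0.
pose phi0 x := q x ^ (1 - hv%:Z) * p_fun hv M E x - q x.
pose phi1 x := x^-1%:C%C * M%:C%C - dC q x / q x.
pose C0 := k1 R hv M * nr E ^+ (s_const hv M).+1 * 2 ^+ hv.-1.
pose C1 := 2 * k2 R hv M * nr E.
have C00 : 0 <= C0.
  by rewrite /C0 !mulr_ge0 ?exprn_ge0 ?nr_ge0 // k_ge0.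
have C10 : 0 <= C1.
  by rewrite /C1 !mulr_ge0 ?nr_ge0 // k_ge0.
exists 2%N, (fun i : 'I_2 => if val i == 0%N then e0hat else hhat),
  (fun i x => if val i == 0%N then phi0 x else phi1 x), (C0 + C1), x0.
move=> x xx0.
have x1 : 1 <= x by apply: le_trans x01 (ltW xx0).
have ue := Hx0 x xx0.
split.
  rewrite big_ord_recr big_ord1 /=.
  rewrite /gauge /A Hqad /Lambda /phi0 /phi1 scalerA scalerDr scalerBr scalerA !scalerBl.
  exact: zmod_id.
have w0 : 0 <= x `^ (-1 - delta) by apply: powR_ge0.
move=> i; rewrite nrE; change ((nr (if val i == 0%N then phi0 x else phi1 x))%:C%C
   <= ((C0 + C1) * x `^ (-1 - delta))%:C%C); rewrite lecR.
case: i => [[|[|]]] //= _.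
  apply: le_trans (phi0_bound R hv M E hv0 x x1 ue) _.
  by apply: ler_wpM2r => //; rewrite lerDl.
apply: le_trans (phi1_bound R hv M E hv0 M0 x x1 ue) _.
by apply: ler_wpM2r => //; rewrite lerDr.
Qed.
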